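(* The cycle $C_5$ is the only connected graph $G$ without a triangle $K_3$ as a subgraph for which $\chi(G)=3$ and $\mathrm{sn}(G)=n-2$, where $n$ is the order of $G$.
   Context: All graphs are finite and simple. For a graph $G=(V,E)$ with $k=\chi(G)$, a proper $k$-colouring is a map $c:V\to[k]$ with $c(u)\neq c(v)$ for every edge $uv$. A set $S\subseteq V$ is a determining set for $(G,c)$ if there is no proper $k$-colouring $c'\neq c$ with $c'(s)=c(s)$ for all $s\in S$; a critical set is an inclusion-minimal determining set. $\mathrm{sn}(G)$ is the minimum size of a critical set over all proper $\chi(G)$-colourings $c$ of $G$ (equivalently, the minimum number of vertices coloured in a partial colouring that extends uniquely to a proper $\chi(G)$-colouring). *)

(* Defs.v *)
(* A finite simple graph is a finType T with a symmetric,
   irreflexive adjacency relation e : rel T. *)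
From mathcomp Require Import all_boot.
Set Implicit Arguments. Unset Strict Implicit. Unset Printing Implicit Defensive.

Section Graphs.
Variables (T : finType) (e : rel T).

Definition proper_colouring (k : nat) (c : {ffun T -> 'I_k}) : bool :=
  [forall u, forall v, e u v ==> (c u != c v)].

Definition is_chromatic_number (k : nat) : Prop :=
  (exists c : {ffun T -> 'I_k}, proper_colouring c) /\
  (forall j, j < k -> forall c : {ffun T -> 'I_j}, ~~ proper_colouring c).

Definition determining (k : nat) (c : {ffun T -> 'I_k}) (S : {set T}) : bool :=
  [forall c' : {ffun T -> 'I_k},
     (proper_colouring c' && [forall s in S, c' s == c s]) ==> (c' == c)].

Definition critical (k : nat) (c : {ffun T -> 'I_k}) (S : {set T}) : bool :=
  determining c S && [forall S' : {set T}, (S' \proper S) ==> ~~ determining c S'].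

Definition is_sn (m : nat) : Prop :=
  exists k, is_chromatic_number k /\
    (exists (c : {ffun T -> 'I_k}) (S : {set T}),
        proper_colouring c /\ critical c S /\ #|S| = m) /\
    (forall (c : {ffun T -> 'I_k}) (S : {set T}),
        proper_colouring c -> critical c S -> m <= #|S|).

Definition connected_graph : Prop := forall x y : T, connect e x y.

Definition triangle_free : Prop := forall x y z : T, ~ [&& e x y, e y z & e x z].

End Graphs.

Definition C5_adj : rel 'I_5 :=
  fun i j => (val j == (val i).+1 %% 5) || (val i == (val j).+1 %% 5).

Definition isomorphic_to_C5 (T : finType) (e : rel T) : Prop :=
  exists f : T -> 'I_5, bijective f /\ forall x y, e x y = C5_adj (f x) (f y).

(* Main.v *)
Require Import Defs.
From mathcomp Require Import all_boot perm.
From mathcomp Require Import zify.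
From Stdlib Require Import Classical.
Set Implicit Arguments. Unset Strict Implicit. Unset Printing Implicit Defensive.

Definition k0 : 'I_3 := @Ordinal 3 0 isT.
Definition k1 : 'I_3 := @Ordinal 3 1 isT.
Definition k2 : 'I_3 := @Ordinal 3 2 isT.

Lemma I3_force (a b d z : 'I_3) : a != b -> a != d -> b != d -> z != a -> z != b -> z = d.
Proof.
case: a b d z => [a Ha] [b Hb] [d Hd] [z Hz].
rewrite -!val_eqE /= => h1 h2 h3 h4 h5; apply/val_inj => /=. lia.
Qed.

Lemma I3_avoid (a b : 'I_3) : exists k : 'I_3, k != a /\ k != b.
Proof.
case: a b => [a Ha] [b Hb].
case: (boolP ((a != 0) && (b != 0))) => [/andP[h1 h2]|h].
  by exists k0; rewrite -!val_eqE /= eq_sym h1 eq_sym h2.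
case: (boolP ((a != 1) && (b != 1))) => [/andP[h1 h2]|h'].
  by exists k1; rewrite -!val_eqE /= eq_sym h1 eq_sym h2.
exists k2; rewrite -!val_eqE /=. split; apply/eqP; lia.
Qed.

Section Main.
Variables (T : finType) (e : rel T).
Hypothesis e_sym : symmetric e.
Hypothesis e_irr : irreflexive e.
Hypothesis tf : triangle_free e.
Implicit Types (W : {set T}) (A B : {set T}).

Definition properW (W : {set T}) (c : T -> 'I_3) :=
  forall x y, x \in W -> y \in W -> e x y -> c x != c y.
Definition bip (W : {set T}) :=
  exists b : T -> bool, forall x y, x \in W -> y \in W -> e x y -> b x != b y.
Definition eW (W : {set T}) : rel T := fun x y => [&& x \in W, y \in W & e x y].
Definition connW (W : {set T}) := forall x y, x \in W -> y \in W -> connect (eW W) x y.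
Definition nb (W : {set T}) v := [set u in W | e v u].
Definition goodc (W : {set T}) (c : T -> 'I_3) :=
  properW W c /\ exists U : {set T}, [/\ U \subset W, #|U| = 3 &
    forall c', properW W c' -> (forall x, x \in W -> x \notin U -> c' x = c x) ->
               forall x, x \in W -> c' x = c x].
Definition good W := exists c, goodc W c.

Lemma e_neq x y : e x y -> x != y.
Proof. by move=> h; apply/eqP => exy; move: h; rewrite exy e_irr. Qed.

Lemma tf3 x y z : e x y -> e y z -> ~~ e x z.
Proof. move=> h1 h2; apply/negP => h3; apply: (tf (x:=x) (y:=y) (z:=z)); by rewrite h1 h2 h3. Qed.

Lemma neq_ne z x y : e z x -> ~~ e z y -> x != y.
Proof. by move=> h1 h2; apply/eqP => exy; move: h2; rewrite -exy h1. Qed.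

Lemma nbP W v u : (u \in nb W v) = (u \in W) && e v u.
Proof. by rewrite inE. Qed.

Lemma eW_sym W : symmetric (eW W).
Proof. by move=> x y; rewrite /eW e_sym andbCA. Qed.

Lemma force1 W (c c' : T -> 'I_3) v x y : properW W c' -> v \in W -> x \in W -> y \in W ->
  e v x -> e v y -> c x != c y -> c x != c v -> c y != c v ->
  c' x = c x -> c' y = c y -> c' v = c v.
Proof.
move=> pc vW xW yW evx evy h1 h2 h3 ex ey.
apply: (I3_force h1 h2 h3).
- by rewrite -ex; apply: pc.
- by rewrite -ey; apply: pc.
Qed.

Definition wit (W : {set T}) (c : T -> 'I_3) (K : pred T) v :=
  exists x y, [/\ x \in W, y \in W, e v x, e v y &
                  [/\ K x, K y, c x != c y, c x != c v & c y != c v]].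

Lemma chain_good W c f1 f2 f3 : properW W c -> f1 \in W -> f2 \in W -> f3 \in W ->
  f1 != f2 -> f1 != f3 -> f2 != f3 ->
  wit W c (fun x => x \notin [set f1; f2; f3]) f1 ->
  wit W c (fun x => (x \notin [set f1; f2; f3]) || (x == f1)) f2 ->
  wit W c (fun x => (x \notin [set f1; f2; f3]) || (x == f1) || (x == f2)) f3 ->
  goodc W c.
Proof.
move=> pc f1W f2W f3W n12 n13 n23 w1 w2 w3; split=> //.
exists [set f1; f2; f3]; split.
- by apply/subsetP => x; rewrite !inE -orbA; case/or3P => /eqP ->.
- by rewrite -setUA cardsU1 cards2 !inE negb_or n12 n13 n23.
move=> c' pc' ag.
have e1 : c' f1 = c f1.
  case: w1 => x [y [xW yW ex ey [kx ky d1 d2 d3]]].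
  by apply: (force1 pc' f1W xW yW ex ey d1 d2 d3); apply: ag.
have e2 : c' f2 = c f2.
  case: w2 => x [y [xW yW ex ey [kx ky d1 d2 d3]]].
  apply: (force1 pc' f2W xW yW ex ey d1 d2 d3).
    by case/orP: kx => [/(ag _ xW)|/eqP->].
  by case/orP: ky => [/(ag _ yW)|/eqP->].
have e3 : c' f3 = c f3.
  case: w3 => x [y [xW yW ex ey [kx ky d1 d2 d3]]].
  apply: (force1 pc' f3W xW yW ex ey d1 d2 d3).
    by case/orP: kx => [/orP[/(ag _ xW)|/eqP->]|/eqP->].
  by case/orP: ky => [/orP[/(ag _ yW)|/eqP->]|/eqP->].
move=> x xW; case: (boolP (x \in [set f1; f2; f3])) => [|/(ag _ xW)//].
by rewrite !inE -orbA; case/or3P => /eqP ->.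
Qed.

Lemma goodc_cong W (c c' : T -> 'I_3) : (forall x, x \in W -> c x = c' x) -> goodc W c' -> goodc W c.
Proof.
move=> hc [pc [U [sU cU hU]]]; split.
  by move=> x y xW yW exy; rewrite !hc //; apply: pc.
exists U; split=> // c'' pc'' ag x xW.
rewrite hc //; apply: hU => // y yW yU; by rewrite ag // hc.
Qed.

Lemma goodc_mono W W' c : W' \subset W -> properW W c -> goodc W' c -> goodc W c.
Proof.
move=> sW pc [_ [U [sU cU hU]]]; split=> //.
exists U; split=> //; first exact: subset_trans sW.
move=> c' pc' ag x xW.
case: (boolP (x \in W')) => xW'.
  apply: hU => //.
    by move=> y z yW zW eyz; apply: pc' => //; apply: (subsetP sW).
  by move=> y yW yU; apply: ag => //; apply: (subsetP sW).
apply: ag => //; apply/negP => xU; move/negP: xW'; apply; exact: (subsetP sU).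
Qed.

Lemma bip_sub W1 W2 : W1 \subset W2 -> bip W2 -> bip W1.
Proof.
move=> s [b hb]; exists b => x y xW yW; apply: hb; exact: (subsetP s).
Qed.

Lemma ext2 W v q r (b : T -> bool) : v \in W -> nb W v \subset [set q; r] ->
  (forall x y, x \in W :\ v -> y \in W :\ v -> e x y -> b x != b y) ->
  b q = b r -> bip W.
Proof.
move=> vW sN hb bqr.
exists (fun x => if x == v then ~~ b q else b x) => x y xW yW exy.
have key : forall z, z \in W -> e v z -> z != v /\ (b z = b q).
  move=> z zW evz; split; first by rewrite eq_sym e_neq.
  have : z \in [set q; r] by apply: (subsetP sN); rewrite nbP zW.
  by rewrite !inE => /orP[]/eqP->.
case: (eqVneq x v) => [exv|nxv]; case: (eqVneq y v) => [eyv|nyv].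
- by move: exy; rewrite exv eyv e_irr.
- by subst x; case: (key y yW exy) => _ ->; case: (b q).
- by subst y; rewrite e_sym in exy; case: (key x xW exy) => _ ->; case: (b q).
- by apply: hb => //; rewrite !inE ?nxv ?nyv.
Qed.

Lemma cyc5_nonbip W v0 v1 v2 v3 v4 : v0 \in W -> v1 \in W -> v2 \in W -> v3 \in W -> v4 \in W ->
  e v0 v1 -> e v1 v2 -> e v2 v3 -> e v3 v4 -> e v4 v0 -> ~ bip W.
Proof.
move=> h0 h1 h2 h3 h4 e01 e12 e23 e34 e40 [b hb].
move: (hb _ _ h0 h1 e01) (hb _ _ h1 h2 e12) (hb _ _ h2 h3 e23) (hb _ _ h3 h4 e34) (hb _ _ h4 h0 e40).
by case: (b v0); case: (b v1); case: (b v2); case: (b v3); case: (b v4).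
Qed.

Lemma card_seq_le (s : seq T) (A : {set T}) : uniq s -> {subset s <= A} -> size s <= #|A|.
Proof.
move=> us sA; rewrite -(card_uniqP us); apply: subset_leq_card; apply/subsetP => x; exact: sA.
Qed.

Lemma card_le1 (A : {set T}) (a0 : T) : #|A| <= 1 -> exists q, A \subset [set q].
Proof.
move=> h; case: (set_0Vmem A) => [->|[q qA]]; first by exists a0; exact: sub0set.
exists q; apply/subsetP => x xA; rewrite inE; apply/negPn/negP => nxq.
have : 2 <= #|A|.
  have -> : 2 = size [:: x; q] by [].
  by apply: card_seq_le => [|z]; rewrite /= ?inE ?nxq // => /orP[]/eqP->.
by rewrite leqNgt ltnS h.
Qed.

Lemma card_ge2 (A : {set T}) a : 2 <= #|A| -> exists2 u, u \in A & u != a.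
Proof.
move=> h; case: (boolP (A \subset [set a])) => [s|].
  by move: (subset_leq_card s); rewrite cards1 => h'; move: (leq_trans h h').
by case/subsetPn => u uA; rewrite inE => nua; exists u.
Qed.

Lemma card_le2 (A : {set T}) q : #|A| <= 2 -> q \in A -> exists2 r, r \in A & A \subset [set q; r].
Proof.
move=> h qA; case: (boolP (A \subset [set q])) => [s|].
  by exists q => //; apply: (subset_trans s); apply/subsetP => x; rewrite !inE => ->.
case/subsetPn => r rA; rewrite inE => nrq; exists r => //.
apply/subsetP => x xA; rewrite !inE; apply/negPn/negP; rewrite negb_or => /andP[nxq nxr].
have : 3 <= #|A|.
  have -> : 3 = size [:: x; q; r] by [].
  apply: card_seq_le => [|z]; first by rewrite /= !inE negb_or nxq nxr eq_sym nrq.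
  by rewrite !inE; case/or3P => /eqP->.
by rewrite leqNgt ltnS h.
Qed.

Lemma card_ge3 (A : {set T}) : 3 <= #|A| -> exists x1 x2 x3, [/\ x1 \in A, x2 \in A, x3 \in A & [/\ x1 != x2, x1 != x3 & x2 != x3]].
Proof.
move=> h; have [x1 x1A] : exists x, x \in A.
  by apply/set0Pn; rewrite -cards_eq0 -lt0n (leq_trans _ h).
have h2 : 2 <= #|A :\ x1| by move: h; rewrite (cardsD1 x1) x1A.
have [x2] := card_ge2 x1 h2; rewrite !inE => /andP[n21 x2A] _.
have h3 : 2 <= #|A :\ x1| := h2.
have [x3] := card_ge2 x2 h3; rewrite !inE => /andP[n31 x3A] n32.
exists x1, x2, x3; split=> //; split; by rewrite eq_sym.
Qed.

Lemma card_gt_notin (A B : {set T}) : #|B| < #|A| -> exists2 x, x \in A & x \notin B.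
Proof.
move=> h; case: (boolP (A \subset B)) => [s|/subsetPn[x xA xB]]; last by exists x.
by move: (subset_leq_card s); rewrite leqNgt h.
Qed.


Ltac neqs := repeat match goal with
 | H : is_true (?x != ?y) |- context [?x == ?y] => rewrite (negbTE H)
 | H : is_true (?x != ?y) |- context [?y == ?x] => rewrite (eq_sym y x) (negbTE H)
 end; rewrite ?eqxx /=.

Ltac nes := repeat match goal with
 | H : is_true (~~ e ?x ?y) |- context [e ?x ?y] => rewrite (negbTE H)
 | H : is_true (~~ e ?x ?y) |- context [e ?y ?x] => rewrite (e_sym y x) (negbTE H)
 end; rewrite ?e_irr.

Lemma exists_notin_seq (s : seq T) W : size s < #|W| -> exists2 x, x \in W & x \notin s.
Proof.
move=> h; case: (boolP (W \subset [pred z in s])) => [sb|/subsetPn[x xW xs]]; last by exists x.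
move: (subset_leq_card sb) (card_size s) => h1 h2.
by move: (leq_trans h1 h2); rewrite leqNgt h.
Qed.

Lemma mem_of_card (s : seq T) W : uniq s -> {subset s <= W} -> #|W| <= size s ->
  forall y, y \in W -> y \in s.
Proof.
move=> us sW hs y yW; apply/negPn/negP => ys.
have : size (y :: s) <= #|W|.
  apply: card_seq_le => [|z]; first by rewrite /= ys us.
  by rewrite inE => /orP[/eqP->//|/sW].
by rewrite /= ltnNge hs.
Qed.

Lemma nonbip_leaf W v : v \in W -> #|nb W v| <= 1 -> ~ bip W -> ~ bip (W :\ v).
Proof.
move=> vW dv nbW [b hb]; have [q sq] := card_le1 v dv.
apply: nbW; apply: (ext2 (q:=q) (r:=q) vW _ hb) => //; by rewrite setUid.
Qed.

Lemma nonbip_nonempty W : ~ bip W -> exists v, v \in W.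
Proof.
move=> nbW; case: (set_0Vmem W) => [W0|[v vW]]; last by exists v.
exfalso; apply: nbW.
by exists (fun _ => true) => x y; rewrite W0 inE.
Qed.

Lemma L5 W : ~ bip W -> 5 <= #|W|.
Proof.
move: {2}#|W| (leqnn #|W|) => n; elim: n W => [|n IH] W hn nbW.
  have [v vW] := nonbip_nonempty nbW.
  by move: hn; rewrite leqn0 cards_eq0 => /eqP WE; rewrite WE inE in vW.
case: (leqP 5 #|W|) => // small; exfalso.
case: (classic (exists2 v, v \in W & #|nb W v| <= 1)) => [[v vW dv]|hnot].
  have := IH (W :\ v) _ (nonbip_leaf vW dv nbW).
  have cW : #|W| = (#|W :\ v|).+1 by rewrite (cardsD1 v) vW.
  rewrite cW in hn small.
  move=> /(_ hn) h5; lia.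
have hdeg : forall u, u \in W -> 2 <= #|nb W u|.
  by move=> u uW; rewrite ltnNge; apply/negP => du; apply: hnot; exists u.
have [v vW] := nonbip_nonempty nbW.
have [a] := card_ge2 v (hdeg v vW); rewrite nbP => /andP[aW eva] _.
have [b] := card_ge2 a (hdeg v vW); rewrite nbP => /andP[bW evb] nba.
have [a'] := card_ge2 v (hdeg a aW); rewrite nbP => /andP[a'W eaa'] na'v.
have [b'] := card_ge2 v (hdeg b bW); rewrite nbP => /andP[b'W ebb'] nb'v.
have nab : ~~ e a b by apply: (tf3 (y:=v)); rewrite // e_sym.
have nva' : ~~ e v a' by apply: tf3 eaa'.
have nva : v != a := e_neq eva.
have nvb : v != b := e_neq evb.
have naa' : a != a' := e_neq eaa'.
have nbb' : b != b' := e_neq ebb'.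
have na'b : a' != b by apply: (neq_ne eaa').
have nb'a : b' != a by apply: (neq_ne ebb'); rewrite e_sym.
have ebA : forall z, z \in W -> z \in [:: v; a; b; a'].
  move=> z zW; apply/negPn/negP => zn.
  have : size [:: z; v; a; b; a'] <= #|W|.
    apply: card_seq_le => [|y]; last by rewrite !inE => /or4P[|||/orP[]] /eqP->.
    rewrite /= !inE !negb_or; move: zn; rewrite !inE !negb_or => /and4P[-> -> -> ->].
    by neqs.
  by move=> /= h; move: (leq_ltn_trans h small); rewrite ltnn.
have eb'a' : b' = a'.
  move: (ebA b' b'W); rewrite !inE (negbTE nb'v) (negbTE nb'a) eq_sym (negbTE nbb') /=.
  by move/eqP.
apply: nbW; exists (fun z => (z == a) || (z == b)) => x y xW yW.
move: (ebA x xW) (ebA y yW); rewrite !inE.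
case/or4P => /eqP-> ; case/or4P => /eqP->.
 all: neqs; nes; by rewrite ?eqxx ?orbT.
Qed.


Definition isC5 v0 v1 v2 v3 v4 :=
  [/\ [/\ e v0 v1, e v1 v2, e v2 v3, e v3 v4 & e v4 v0],
      [/\ ~~ e v0 v2, ~~ e v1 v3, ~~ e v2 v4, ~~ e v3 v0 & ~~ e v4 v1] &
      uniq [:: v0; v1; v2; v3; v4]].

Lemma isC5_rot v0 v1 v2 v3 v4 : isC5 v0 v1 v2 v3 v4 -> isC5 v1 v2 v3 v4 v0.
Proof.
case=> [[h1 h2 h3 h4 h5] [n1 n2 n3 n4 n5] u]; split; [by split|by split|].
by move: u; rewrite -(rot_uniq 1).
Qed.

Lemma struct5 W : ~ bip W -> #|W| = 5 ->
  exists v0 v1 v2 v3 v4, isC5 v0 v1 v2 v3 v4 /\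
     (forall x, (x \in W) = (x \in [:: v0; v1; v2; v3; v4])).
Proof.
move=> nbW cW.
have hdeg : forall u, u \in W -> 2 <= #|nb W u|.
  move=> u uW; rewrite ltnNge; apply/negP => du.
  have := L5 (nonbip_leaf uW du nbW).
  by move: cW; rewrite (cardsD1 u) uW add1n => [[->]].
have [v vW] := nonbip_nonempty nbW.
have [a] := card_ge2 v (hdeg v vW); rewrite nbP => /andP[aW eva] _.
have [b] := card_ge2 a (hdeg v vW); rewrite nbP => /andP[bW evb] nba.
have [a'] := card_ge2 v (hdeg a aW); rewrite nbP => /andP[a'W eaa'] na'v.
have [b'] := card_ge2 v (hdeg b bW); rewrite nbP => /andP[b'W ebb'] nb'v.
have nab : ~~ e a b by apply: (tf3 (y:=v)); rewrite // e_sym.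
have nva' : ~~ e v a' by apply: tf3 eaa'.
have nvb' : ~~ e v b' by apply: tf3 ebb'.
have nva : v != a := e_neq eva.
have nvb : v != b := e_neq evb.
have naa' : a != a' := e_neq eaa'.
have nbb' : b != b' := e_neq ebb'.
have na'b : a' != b by apply: (neq_ne eaa').
have nb'a : b' != a by apply: (neq_ne ebb'); rewrite e_sym.
have c5 : forall s : seq T, uniq s -> size s = 5 -> {subset s <= W} ->
    forall y, y \in W -> y \in s.
  move=> s us ss sW; apply: mem_of_card => //; by rewrite ss cW.
have eba' : ~~ e b a'.
{ apply/negP => eba'.
  have [x xW xn] : exists2 x, x \in W & x \notin [:: v; a; b; a'].
    by apply: exists_notin_seq; rewrite cW.
  move: xn; rewrite !inE !negb_or => /and4P[nxv nxa nxb nxa'].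
  have ebA := c5 [:: v; a; b; a'; x].
  have ebA' : forall y, y \in W -> y \in [:: v; a; b; a'; x].
    apply: ebA => //; last by move=> y; rewrite !inE => /or4P[|||/orP[]] /eqP->.
    by rewrite /= !inE !negb_or; neqs.
  exfalso; apply: nbW.
  case: (boolP (e x v || e x a')) => hx.
    { have nxa2 : ~~ e x a.
      by case/orP: hx => h; [exact: (tf3 h eva) | apply: (tf3 h); rewrite e_sym].
    have nxb2 : ~~ e x b.
      by case/orP: hx => h; [exact: (tf3 h evb) | apply: (tf3 h); rewrite e_sym].
    exists (fun z => [|| z == a, z == b | z == x]) => y z yW zW.
    move: (ebA' y yW) (ebA' z zW); rewrite !inE.
    case/or4P => [|||/orP[]] /eqP-> ; case/or4P => [|||/orP[]] /eqP->.
    all: timeout 5 (neqs; nes; by rewrite ?eqxx ?orbT). }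
  move: hx; rewrite negb_or => /andP[nxv2 nxa'2].
  exists (fun z => (z == a) || (z == b)) => y z yW zW.
  move: (ebA' y yW) (ebA' z zW); rewrite !inE.
  case/or4P => [|||/orP[]] /eqP-> ; case/or4P => [|||/orP[]] /eqP->.
  all: timeout 5 (neqs; nes; by rewrite ?eqxx ?orbT). }
have nb'a' : b' != a' by apply: (neq_ne ebb').
have us : uniq [:: v; a; a'; b'; b].
  by rewrite /= !inE !negb_or; neqs.
have ebA : forall y, y \in W -> y \in [:: v; a; a'; b'; b].
  apply: c5 => //; by move=> y; rewrite !inE => /or4P[|||/orP[]] /eqP->.
have [z] := card_ge2 a (hdeg a' a'W); rewrite nbP => /andP[zW ea'z] nza.
have ea'b' : e a' b'.
  move: (ebA z zW); rewrite !inE => /or4P[|||/orP[]] /eqP ez; subst z.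
  - by move: ea'z; rewrite e_sym (negbTE nva').
  - by move: nza; rewrite eqxx.
  - by move: ea'z; rewrite e_irr.
  - by [].
  - by move: ea'z; rewrite e_sym (negbTE eba').
have nab' : ~~ e a b' by apply: (tf3 eaa').
exists v, a, a', b', b; split; last by move=> y; apply/idP/idP => [/ebA|]; [ |rewrite !inE => /or4P[|||/orP[]] /eqP->].
split => //; split => //; by rewrite e_sym.
Qed.


Ltac memcase :=
  let H := fresh "H" in move=> H;
  repeat (rewrite in_cons in H; case/orP: H => [/eqP-> | H]);
  try (rewrite in_nil in H; discriminate H).

Lemma isC5_neq v0 v1 v2 v3 v4 : isC5 v0 v1 v2 v3 v4 ->
  [/\ v0 != v1, v1 != v2, v2 != v3, v3 != v4 & v4 != v0] /\
      [/\ v0 != v2, v1 != v3, v2 != v4, v3 != v0 & v4 != v1].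
Proof.
case=> [[e01 e12 e23 e34 e40] [n02 n13 n24 n30 n41] _].
split; split; try exact: e_neq.
- by rewrite eq_sym; apply: (neq_ne (z:=v3)); rewrite // e_sym.
- by rewrite eq_sym; apply: (neq_ne (z:=v4)); rewrite // e_sym.
- by rewrite eq_sym; apply: (neq_ne (z:=v0)); rewrite // e_sym.
- by rewrite eq_sym; apply: (neq_ne (z:=v1)); rewrite // e_sym.
- by rewrite eq_sym; apply: (neq_ne (z:=v2)); rewrite // e_sym.
Qed.

Lemma base0 W p v0 v1 v2 v3 v4 : isC5 v0 v1 v2 v3 v4 -> p \notin [:: v0; v1; v2; v3; v4] ->
  (forall x, (x \in W) = (x \in [:: p; v0; v1; v2; v3; v4])) ->
  e p v0 -> ~~ e p v1 -> ~~ e p v3 -> ~~ e p v4 -> good W.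
Proof.
move=> C pn hW ep0 np1 np3 np4.
have [[d01 d12 d23 d34 d40] [d02 d13 d24 d30 d41]] := isC5_neq C.
case: C => [[e01 e12 e23 e34 e40] [n02 n13 n24 n30 n41] _].
move: pn; rewrite !inE !negb_or => /and5P[dp0 dp1 dp2 dp3 dp4].
exists (fun x => if x == v0 then k0 else if x == v1 then k1 else if x == v2 then k0
           else if x == v3 then k2 else if x == v4 then k1 else k2).
have iW : forall x, x \in [:: p; v0; v1; v2; v3; v4] -> x \in W by move=> x; rewrite hW.
apply: (chain_good (f1:=v0) (f2:=v2) (f3:=v4)); rewrite ?iW ?inE ?eqxx ?orbT //.
- move=> x y; rewrite !hW; memcase; memcase; neqs; nes; done.
- by rewrite eq_sym.
- exists v1, p; split; rewrite ?iW ?inE ?eqxx ?orbT //; first by rewrite e_sym.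
  by split; neqs.
- exists v1, v3; split; rewrite ?iW ?inE ?eqxx ?orbT //; first by rewrite e_sym.
  by split; neqs.
- exists v0, v3; split; rewrite ?iW ?inE ?eqxx ?orbT //; first by rewrite e_sym.
  by split; neqs.
Qed.


Lemma mem_rot5 (x v0 v1 v2 v3 v4 : T) :
  (x \in [:: v1; v2; v3; v4; v0]) = (x \in [:: v0; v1; v2; v3; v4]).
Proof. exact: (mem_rot 1 [:: v0; v1; v2; v3; v4] x). Qed.

Definition conf W p v0 v1 v2 v3 v4 := [/\ isC5 v0 v1 v2 v3 v4, p \notin [:: v0; v1; v2; v3; v4] &
  (forall x, (x \in W) = (x \in [:: p; v0; v1; v2; v3; v4]))].

Lemma conf_rot W p v0 v1 v2 v3 v4 : conf W p v0 v1 v2 v3 v4 -> conf W p v1 v2 v3 v4 v0.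
Proof.
case=> C pn hW; split; first exact: isC5_rot.
  by rewrite (mem_rot5 p v0 v1 v2 v3 v4).
by move=> x; rewrite hW !(in_cons p) (mem_rot5 x v0 v1 v2 v3 v4).
Qed.

Lemma base1 W p v0 v1 v2 v3 v4 : conf W p v0 v1 v2 v3 v4 -> e p v0 -> good W.
Proof.
move=> cf ep0; have [C pn hW] := cf.
have [[e01 e12 e23 e34 e40] _ _] := C.
have np1 : ~~ e p v1 := tf3 ep0 e01.
have np4 : ~~ e p v4 by apply: (tf3 ep0); rewrite e_sym.
case: (boolP (e p v3)) => ep3; last exact: base0 C pn hW ep0 np1 ep3 np4.
have np2 : ~~ e p v2 by apply: (tf3 ep3); rewrite e_sym.
have [C' pn' hW'] := conf_rot (conf_rot (conf_rot cf)).
exact: (base0 C' pn' hW').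
Qed.

Lemma baseC W v : v \in W -> ~ bip (W :\ v) -> #|W :\ v| = 5 ->
  (exists2 q, q \in W :\ v & e v q) -> good W.
Proof.
move=> vW nb5 c5 [q qW evq].
have [v0 [v1 [v2 [v3 [v4 [C hm]]]]]] := struct5 nb5 c5.
have pn : v \notin [:: v0; v1; v2; v3; v4] by rewrite -hm !inE eqxx.
have hW : forall x, (x \in W) = (x \in [:: v; v0; v1; v2; v3; v4]).
  move=> x; rewrite in_cons -hm !inE; case: (eqVneq x v) => [->|] //=; by rewrite vW.
have cf : conf W v v0 v1 v2 v3 v4 by split.
move: qW; rewrite hm !inE => /or4P[|||/orP[]] /eqP eq; subst q.
- exact: base1 cf evq.
- exact: base1 (conf_rot cf) evq.
- exact: base1 (conf_rot (conf_rot cf)) evq.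
- exact: base1 (conf_rot (conf_rot (conf_rot cf))) evq.
- exact: base1 (conf_rot (conf_rot (conf_rot (conf_rot cf)))) evq.
Qed.


Definition properb W (c : {ffun T -> 'I_3}) :=
  [forall x in W, forall y in W, e x y ==> (c x != c y)].

Lemma properbP W (c : {ffun T -> 'I_3}) : reflect (properW W c) (properb W c).
Proof.
apply: (iffP forall_inP) => [h x y xW yW exy | h x xW].
  by move/forall_inP: (h x xW) => /(_ y yW) /implyP; apply.
by apply/forall_inP => y yW; apply/implyP; exact: h.
Qed.

Lemma in_set3 (x a b c : T) : (x \in [set a; b; c]) = [|| x == a, x == b | x == c].
Proof. by rewrite !inE orbA. Qed.

Lemma k01 (a b : 'I_3) : a != k2 -> b != k2 -> a != b -> (a == k1) != (b == k1).
Proof. by case: a b => [[|[|[|?]]] ?] [[|[|[|?]]] ?]. Qed.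

Lemma delta3 W (d : T -> 'I_3) : (forall x y, e x y -> d x != d y) -> ~ bip W ->
   (forall v, v \in W -> 3 <= #|nb W v|) -> good W.
Proof.
move=> pd nbW hdeg.
pose c0 := [ffun x => d x].
have P0 : properb W c0 by apply/properbP => x y _ _ exy; rewrite !ffunE; exact: pd.
pose F (c : {ffun T -> 'I_3}) := #|[set x in W | c x == k2]|.
case: (arg_minnP F P0) => c /properbP pc cmin.
pose C2 := [set x in W | c x == k2].
have hrec : forall w k, w \in C2 -> k != k2 -> exists2 u, u \in nb W w & c u = k.
  move=> w k wC kn; case: (classic (exists2 u, u \in nb W w & c u = k)) => // hno.
  exfalso.
  have wW : w \in W by move: wC; rewrite inE => /andP[].
  pose c' := [ffun x => if x == w then k else c x].
  have pc' : properb W c'.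
    apply/properbP => x y xW yW exy; rewrite !ffunE.
    case: (eqVneq x w) => [exw|xw]; case: (eqVneq y w) => [eyw|yw].
    - by subst; rewrite e_irr in exy.
    - subst x; apply/eqP => cy; apply: hno; exists y => //; by rewrite nbP yW exy.
    - subst y; apply/eqP => cx; apply: hno; exists x => //; by rewrite nbP xW e_sym exy.
    - exact: pc.
  have := cmin c' pc'.
  have -> : F c' = #|C2 :\ w|.
    rewrite /F; congr (#|pred_of_set _|); apply/setP => x; rewrite !inE ffunE.
    by case: (eqVneq x w) => [->|] //=; rewrite (negbTE kn) andbF.
  rewrite /F -/C2 (cardsD1 w C2) wC.
  by rewrite add1n ltnn.
have C2W : forall x, x \in C2 -> x \in W by move=> x; rewrite inE => /andP[].
have C2c : forall x, x \in C2 -> c x = k2 by move=> x; rewrite inE => /andP[_ /eqP].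
have nC2 : forall x, x \in W -> x \notin C2 -> c x != k2.
  by move=> x xW; rewrite inE xW.
have [w wC] : exists w, w \in C2.
  case: (set_0Vmem C2) => [C0|[w wC]]; last by exists w.
  exfalso; apply: nbW; exists (fun x => c x == k1) => x y xW yW exy.
  apply: k01; [apply: nC2; rewrite ?C0 ?inE //.. | exact: pc].
case: (leqP 3 #|C2|) => [h3|h2].
  have [w1 [w2 [w3 [w1C w2C w3C [n12 n13 n23]]]]] := card_ge3 h3.
  have witC : forall v (K : pred T), v \in C2 -> (forall x, x \in W -> c x != k2 -> K x) -> wit W c K v.
    move=> v K vC hK.
    have [u0] := hrec v k0 vC isT; rewrite nbP => /andP[u0W evu0] cu0.
    have [u1] := hrec v k1 vC isT; rewrite nbP => /andP[u1W evu1] cu1.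
    exists u0, u1; split => //; split; rewrite ?cu0 ?cu1 ?C2c //; apply: hK; by rewrite ?cu0 ?cu1.
  have hK : forall x, c x != k2 -> x \notin [set w1; w2; w3].
    by move=> x cx; rewrite in_set3; apply/negP; case/or3P => /eqP ex; move: cx; rewrite ex C2c.
  exists c; apply: (chain_good (f1:=w1) (f2:=w2) (f3:=w3)); rewrite ?C2W //.
  - by apply: witC => // x _ /hK.
  - by apply: witC => // x _ /hK ->.
  - by apply: witC => // x _ /hK ->.
have h3 : 3 <= #|nb W w| by apply: hdeg; apply: C2W.
have [u1 [u2 [u3 [u1N u2N u3N [n12 n13 n23]]]]] := card_ge3 h3.
have indep : forall x y, x \in nb W w -> y \in nb W w -> ~~ e x y.
  move=> x y; rewrite !nbP => /andP[_ ewx] /andP[_ ewy]; apply: (tf3 (y:=w)) => //; by rewrite e_sym.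
have witN : forall v (K : pred T), v \in nb W w -> K w ->
    (forall x, x \in nb W v -> x \notin C2 -> K x) -> wit W c K v.
  move=> v K vN Kw hK.
  have [x xN xC] : exists2 x, x \in nb W v & x \notin C2.
    by apply: card_gt_notin; apply: (leq_trans _ (hdeg v _)); rewrite ?ltnS //; move: vN; rewrite nbP => /andP[].
  move: (xN) (vN); rewrite !nbP => /andP[xW evx] /andP[vW ewv].
  have wW := C2W w wC.
  exists w, x; split => //; first by rewrite e_sym.
  split => //; first exact: hK.
  - by rewrite C2c // eq_sym nC2.
  - exact: pc.
  - by apply: pc; rewrite // e_sym.
have hK : forall v x, v \in [set u1; u2; u3] -> x \in nb W v -> x \notin [set u1; u2; u3].
  move=> v x; rewrite !in_set3 => hv xv; apply/negP => hx.
  have vN : v \in nb W w by case/or3P: hv => /eqP ->.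
  have xN : x \in nb W w by case/or3P: hx => /eqP ->.
  by move: (indep _ _ vN xN); rewrite nbP in xv; case/andP: xv => _ ->.
have wU : w \notin [set u1; u2; u3].
  rewrite in_set3; apply/negP; case/or3P => /eqP ew; [move: u1N|move: u2N|move: u3N];
  by rewrite -ew nbP e_irr andbF.
exists c; apply: (chain_good (f1:=u1) (f2:=u2) (f3:=u3)) => //.
- by move: u1N; rewrite nbP => /andP[].
- by move: u2N; rewrite nbP => /andP[].
- by move: u3N; rewrite nbP => /andP[].
- apply: witN => // x xv _; apply: (hK u1) => //; by rewrite !inE eqxx.
- apply: witN; rewrite ?wU // => x xv _; rewrite (hK u2) //; by rewrite !inE eqxx orbT.
- apply: witN; rewrite ?wU // => x xv _; rewrite (hK u3) //; by rewrite !inE eqxx !orbT.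
Qed.


Definition cb (b : T -> bool) p x1 : T -> 'I_3 :=
  fun x => if x == p then k2 else if x == x1 then k2 else if b x then k1 else k0.

Lemma proper_cb W p q r x1 (b : T -> bool) : p \in W -> nb W p \subset [set q; r] ->
  x1 \in W :\ p -> x1 != q -> x1 != r -> b x1 = false ->
  (forall x y, x \in W :\ p -> y \in W :\ p -> e x y -> b x != b y) ->
  properW W (cb b p x1).
Proof.
move=> pW sN x1W n1q n1r bx1 hb.
have x1p : x1 != p by move: x1W; rewrite !inE => /andP[].
have key : forall y, y \in W -> e p y -> cb b p x1 y != k2.
  move=> y yW epy; have yp : y != p by rewrite eq_sym e_neq.
  have : y \in [set q; r] by apply: (subsetP sN); rewrite nbP yW.
  rewrite /cb (negbTE yp) !inE.
  case/orP => /eqP ->.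
    by rewrite (eq_sym q x1) (negbTE n1q); case: (b q).
  by rewrite (eq_sym r x1) (negbTE n1r); case: (b r).
have key2 : forall y, y \in W -> y != p -> e x1 y -> cb b p x1 y = k1.
  move=> y yW yp ey; rewrite /cb (negbTE yp) eq_sym (negbTE (e_neq ey)).
  have := hb x1 y x1W; rewrite !inE yp yW bx1 => /(_ isT ey).
  by case: (b y).
have cp : cb b p x1 p = k2 by rewrite /cb eqxx.
have cx1 : cb b p x1 x1 = k2 by rewrite /cb eqxx (negbTE x1p).
move=> x y xW yW exy.
case: (eqVneq x p) => [ex|xp]; first by subst x; rewrite cp eq_sym key.
case: (eqVneq y p) => [ey|yp]; first by subst y; rewrite cp key // e_sym.
case: (eqVneq x x1) => [ex|xx1]; first by subst x; rewrite cx1 key2.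
case: (eqVneq y x1) => [ey|yx1]; first by subst y; rewrite cx1 key2 // e_sym.
have := hb x y; rewrite !inE xp yp xW yW => /(_ isT isT exy).
rewrite /cb (negbTE xp) (negbTE yp) (negbTE xx1) (negbTE yx1).
by case: (b x); case: (b y).
Qed.


Lemma hard_t W p q r (b : T -> bool) : p \in W -> nb W p \subset [set q; r] ->
  q \in nb W p -> r \in nb W p ->
  (forall x y, x \in W :\ p -> y \in W :\ p -> e x y -> b x != b y) -> b q = false -> b r = true ->
  (forall u, u \in W -> 2 <= #|nb W u|) ->
  forall t, t \in W :\ p -> b t = true -> t != r -> ~~ e q t -> good W.
Proof.
move=> pW sN qN rN hb bq br hdeg t tWp bt ntr nqt.
move: (qN) (rN); rewrite !nbP => /andP[qW epq] /andP[rW epr].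
have qp : q != p by rewrite eq_sym e_neq.
have rp : r != p by rewrite eq_sym e_neq.
have qWp : q \in W :\ p by rewrite !inE qp qW.
have rWp : r \in W :\ p by rewrite !inE rp rW.
have tp : t != p by move: tWp; rewrite !inE => /andP[].
have tW : t \in W by move: tWp; rewrite !inE => /andP[].
have nqr : ~~ e q r by apply: (tf3 (y:=p)); rewrite // e_sym.
have tq : t != q by apply/eqP => etq; move: bt; rewrite etq bq.
have qr : q != r by apply/eqP => eqr; move: bq; rewrite eqr br.
have notp : forall z y, z \in W -> z != q -> z != r -> e z y -> y != p.
  move=> z y zW zq zr ezy; apply/eqP => eyp; subst y.
  have : z \in [set q; r] by apply: (subsetP sN); rewrite nbP zW e_sym.
  by rewrite !inE (negbTE zq) (negbTE zr).
have nbt : forall x, x \in nb W t -> [/\ x \in W :\ p, b x = false, x != q, x != r & x != t].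
  move=> x; rewrite nbP => /andP[xW etx].
  have xp : x != p by apply: (notp t x).
  have xWp : x \in W :\ p by rewrite !inE xp xW.
  have bx : b x = false by move: (hb t x tWp xWp etx); rewrite bt; case: (b x).
  split => //.
  - by apply/eqP => exq; move: nqt; rewrite -exq e_sym etx.
  - by apply/eqP => exr; move: bx; rewrite exr br.
  - by rewrite eq_sym e_neq.
have [xa xaN _] := card_ge2 t (hdeg t tW).
have [xb xbN nba] := card_ge2 xa (hdeg t tW).
have [xr] := card_ge2 p (hdeg r rW); rewrite nbP => /andP[xrW erxr] xrp.
have xrWp : xr \in W :\ p by rewrite !inE xrp xrW.
have bxr : b xr = false by move: (hb r xr rWp xrWp erxr); rewrite br; case: (b xr).
have xrq : xr != q by apply: (neq_ne (z:=r)); rewrite // e_sym.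
have xrr : xr != r by rewrite eq_sym e_neq.
have xrt : xr != t by apply/eqP => e'; move: bxr; rewrite e' bt.
have [x1 [x2 [x1N x2N n12 n1r]]] : exists x1 x2, [/\ x1 \in nb W t, x2 \in nb W t, x1 != x2 & x1 != xr].
  case: (eqVneq xa xr) => [exr|nxr]; [exists xb, xa | exists xa, xb]; split => //.
  - by rewrite exr in nba.
  - by rewrite eq_sym.
have [x1Wp bx1 x1q x1r x1t] := nbt x1 x1N.
have [x2Wp bx2 x2q x2r x2t] := nbt x2 x2N.
have x1p : x1 != p by move: x1Wp; rewrite !inE => /andP[].
have x2p : x2 != p by move: x2Wp; rewrite !inE => /andP[].
have x1W : x1 \in W by move: x1Wp; rewrite !inE => /andP[].
have x2W : x2 \in W by move: x2Wp; rewrite !inE => /andP[].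
have [yq] := card_ge2 p (hdeg q qW); rewrite nbP => /andP[yqW eqyq] yqp.
have yqWp : yq \in W :\ p by rewrite !inE yqp yqW.
have byq : b yq = true by move: (hb q yq qWp yqWp eqyq); rewrite bq; case: (b yq).
have yqr : yq != r by apply: (neq_ne eqyq).
have yqt : yq != t by apply: (neq_ne eqyq).
have yqq : yq != q by rewrite eq_sym e_neq.
have yqx1 : yq != x1 by apply/eqP => e'; move: byq; rewrite e' bx1.
have pc := proper_cb pW sN x1Wp x1q x1r bx1 hb.
have ct : cb b p x1 t = k1 by rewrite /cb (negbTE tp) eq_sym (negbTE x1t) bt.
have cq : cb b p x1 q = k0 by rewrite /cb (negbTE qp) eq_sym (negbTE x1q) bq.
have cr : cb b p x1 r = k1 by rewrite /cb (negbTE rp) eq_sym (negbTE x1r) br.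
have cp : cb b p x1 p = k2 by rewrite /cb eqxx.
have cx1 : cb b p x1 x1 = k2 by rewrite /cb eqxx (negbTE x1p).
have cx2 : cb b p x1 x2 = k0 by rewrite /cb (negbTE x2p) eq_sym (negbTE n12) bx2.
have cxr : cb b p x1 xr = k0 by rewrite /cb (negbTE xrp) eq_sym (negbTE n1r) bxr.
have cyq : cb b p x1 yq = k1 by rewrite /cb (negbTE yqp) (negbTE yqx1) byq.
have pU : p \notin [set q; r; t] by rewrite in_set3 !(eq_sym p) (negbTE qp) (negbTE rp) (negbTE tp).
exists (cb b p x1); apply: (chain_good (f1:=q) (f2:=r) (f3:=t)) => //.
- by rewrite eq_sym.
- by rewrite eq_sym.
- exists p, yq; split => //; first by rewrite e_sym.
  split; rewrite ?cp ?cq ?cyq //.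
  by rewrite in_set3 (negbTE yqq) (negbTE yqr) (negbTE yqt).
- exists p, xr; split => //; first by rewrite e_sym.
  split; rewrite ?cp ?cr ?cxr ?pU //.
  by rewrite in_set3 (negbTE xrq) (negbTE xrr) (negbTE xrt).
- move: x1N x2N; rewrite !nbP => /andP[_ etx1] /andP[_ etx2].
  exists x1, x2; split => //; split; rewrite ?cx1 ?cx2 ?ct //.
  + by rewrite in_set3 (negbTE x1q) (negbTE x1r) (negbTE x1t).
  + by rewrite in_set3 (negbTE x2q) (negbTE x2r) (negbTE x2t).
Qed.


Lemma card_sub2 A (a b : T) : A \subset [set a; b] -> #|A| <= 2.
Proof. move/subset_leq_card => h; apply: (leq_trans h); by rewrite cards2 ltnS leq_b1. Qed.

Lemma hard_final W p q r (b : T -> bool) : p \in W -> nb W p \subset [set q; r] ->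
  q \in nb W p -> r \in nb W p ->
  (forall x y, x \in W :\ p -> y \in W :\ p -> e x y -> b x != b y) -> b q = false -> b r = true ->
  (forall u, u \in W -> 2 <= #|nb W u|) ->
  (forall u, u \in W -> #|nb W u| <= 2 -> bip (W :\ u)) -> 6 <= #|W| ->
  (forall t, t \in W :\ p -> b t = true -> t != r -> e q t) ->
  (forall s, s \in W :\ p -> b s = false -> s != q -> e r s) -> good W.
Proof.
move=> pW sN qN rN hb bq br hdeg hbip big hT hS.
move: (qN) (rN); rewrite !nbP => /andP[qW epq] /andP[rW epr].
have qp : q != p by rewrite eq_sym e_neq.
have rp : r != p by rewrite eq_sym e_neq.
have qWp : q \in W :\ p by rewrite !inE qp qW.
have rWp : r \in W :\ p by rewrite !inE rp rW.
have nqr : ~~ e q r by apply: (tf3 (y:=p)); rewrite // e_sym.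
have qr : q != r by apply/eqP => eqr; move: bq; rewrite eqr br.
have nbz : forall z y, z \in W :\ p -> z != q -> z != r -> y \in nb W z ->
    y \in W :\ p /\ b y = ~~ b z.
  move=> z y zWp zq zr; rewrite nbP => /andP[yW ezy].
  have zW : z \in W by move: zWp; rewrite !inE => /andP[].
  have yp : y != p.
    apply/eqP => eyp; subst y.
    have : z \in [set q; r] by apply: (subsetP sN); rewrite nbP zW e_sym.
    by rewrite !inE (negbTE zq) (negbTE zr).
  have yWp : y \in W :\ p by rewrite !inE yp yW.
  by split => //; move: (hb z y zWp yWp ezy); case: (b y); case: (b z).
have [yq] := card_ge2 p (hdeg q qW); rewrite nbP => /andP[yqW eqyq] yqp.
have yqWp : yq \in W :\ p by rewrite !inE yqp yqW.
have byq : b yq = true by move: (hb q yq qWp yqWp eqyq); rewrite bq; case: (b yq).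
have yqr : yq != r by apply: (neq_ne eqyq).
have yqq : yq != q by rewrite eq_sym e_neq.
have [xr] := card_ge2 p (hdeg r rW); rewrite nbP => /andP[xrW erxr] xrp.
have xrWp : xr \in W :\ p by rewrite !inE xrp xrW.
have bxr : b xr = false by move: (hb r xr rWp xrWp erxr); rewrite br; case: (b xr).
have xrq : xr != q by apply: (neq_ne (z:=r)); rewrite // e_sym.
have xrr : xr != r by rewrite eq_sym e_neq.
have Wp : forall z, z \in W -> z != p -> z \in W :\ p by move=> z zW zp; rewrite !inE zp zW.
case: (classic (exists y', [/\ y' \in W :\ p, b y' = true, y' != r & y' != yq])) => [[y' [y'Wp by' y'r y'yq]]|nA];
case: (classic (exists x', [/\ x' \in W :\ p, b x' = false, x' != q & x' != xr])) => [[x' [x'Wp bx' x'q x'xr]]|nB].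
-
  have [y] := card_ge2 r (hdeg xr xrW); move=> yN yr.
  have [yWp by1] := nbz xr y xrWp xrq xrr yN.
  rewrite bxr /= in by1.
  move: yN; rewrite nbP => /andP[yW exry].
  have yp : y != p by move: yWp; rewrite !inE => /andP[].
  have [y'' [y''Wp by'' y''r y''y]] : exists y'', [/\ y'' \in W :\ p, b y'' = true, y'' != r & y'' != y].
    case: (eqVneq yq y) => [eyq|nyq]; [exists y' | exists yq]; split => //.
    by rewrite -eyq.
  have y''p : y'' != p by move: y''Wp; rewrite !inE => /andP[].
  have y''W : y'' \in W by move: y''Wp; rewrite !inE => /andP[].
  have x'p : x' != p by move: x'Wp; rewrite !inE => /andP[].
  have x'W : x' \in W by move: x'Wp; rewrite !inE => /andP[].
  have pc := proper_cb pW sN xrWp xrq xrr bxr hb.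
  have cr : cb b p xr r = k1 by rewrite /cb (negbTE rp) eq_sym (negbTE xrr) br.
  have cq : cb b p xr q = k0 by rewrite /cb (negbTE qp) eq_sym (negbTE xrq) bq.
  have cp : cb b p xr p = k2 by rewrite /cb eqxx.
  have cxr : cb b p xr xr = k2 by rewrite /cb eqxx (negbTE xrp).
  have yxr : y != xr by rewrite eq_sym e_neq.
  have cy : cb b p xr y = k1 by rewrite /cb (negbTE yp) (negbTE yxr) by1.
  have x'xr' : x' != xr := x'xr.
  have cx' : cb b p xr x' = k0 by rewrite /cb (negbTE x'p) (negbTE x'xr) bx'.
  have y''xr : y'' != xr by apply/eqP => e'; move: by''; rewrite e' bxr.
  have cy'' : cb b p xr y'' = k1 by rewrite /cb (negbTE y''p) (negbTE y''xr) by''.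
  have yq' : y != q by apply/eqP => e'; move: by1; rewrite e' bq.
  have ry : r != y by rewrite eq_sym yr.
  have pU : p \notin [set r; q; y] by rewrite in_set3 !(eq_sym p) (negbTE qp) (negbTE rp) (negbTE yp).
  exists (cb b p xr); apply: (chain_good (f1:=r) (f2:=q) (f3:=y)) => //.
  + by rewrite eq_sym.
  + by rewrite eq_sym.
  + exists p, x'; split => //; first by rewrite e_sym.
      by apply: hS.
    split; rewrite ?cp ?cr ?cx' //.
    have x'r : x' != r by apply/eqP => e'; move: bx'; rewrite e' br.
    have x'y : x' != y by apply/eqP => e'; move: bx'; rewrite e' by1.
    by rewrite in_set3 (negbTE x'r) (negbTE x'q) (negbTE x'y).
  + exists p, y''; split => //; first by rewrite e_sym.
      by apply: hT.
    split; rewrite ?cp ?cq ?cy'' ?pU //.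
    have y''q : y'' != q by apply/eqP => e'; move: by''; rewrite e' bq.
    by rewrite in_set3 (negbTE y''r) (negbTE y''q) (negbTE y''y).
  + exists q, xr; split => //; first by rewrite e_sym; apply: hT.
      by rewrite e_sym.
    split; rewrite ?cq ?cxr ?cy ?eqxx ?orbT //.
    have xry : xr != y by rewrite e_neq.
    by rewrite in_set3 (negbTE xrr) (negbTE xrq) (negbTE xry).
-
  exfalso.
  have y'W : y' \in W by move: y'Wp; rewrite !inE => /andP[].
  have y'q : y' != q by apply/eqP => e'; move: by'; rewrite e' bq.
  have sub : forall z, z \in W :\ p -> z != q -> z != r -> b z = true -> nb W z \subset [set q; xr].
    move=> z zWp zq zr bz; apply/subsetP => y yN.
    have [yWp by1] := nbz z y zWp zq zr yN; rewrite bz /= in by1.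
    rewrite !inE; apply/negPn/negP; rewrite negb_or => /andP[yq' yxr].
    by apply: nB; exists y.
  have [z zN zq] := card_ge2 q (hdeg yq yqW).
  have eyqxr : e yq xr.
    move: (subsetP (sub yq yqWp yqq yqr byq) z zN); rewrite !inE (negbTE zq) /= => /eqP ez.
    by move: zN; rewrite ez nbP => /andP[].
  have := hbip y' y'W (card_sub2 (sub y' y'Wp y'q y'r by')).
  have y'p : y' != p by move: y'Wp; rewrite !inE => /andP[].
  have y'xr : y' != xr by apply/eqP => e'; move: by'; rewrite e' bxr.
  have inW' : forall w, w \in W -> y' != w -> w \in W :\ y' by move=> w wW wy; rewrite !inE eq_sym wy wW.
  apply: (cyc5_nonbip (v0:=p) (v1:=q) (v2:=yq) (v3:=xr) (v4:=r)); rewrite ?inW' // 1?eq_sym //;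
    by rewrite e_sym.
-
  exfalso.
  have x'W : x' \in W by move: x'Wp; rewrite !inE => /andP[].
  have x'r : x' != r by apply/eqP => e'; move: bx'; rewrite e' br.
  have sub : forall z, z \in W :\ p -> z != q -> z != r -> b z = false -> nb W z \subset [set r; yq].
    move=> z zWp zq zr bz; apply/subsetP => y yN.
    have [yWp by1] := nbz z y zWp zq zr yN; rewrite bz /= in by1.
    rewrite !inE; apply/negPn/negP; rewrite negb_or => /andP[yr' yyq].
    by apply: nA; exists y.
  have [z zN zr] := card_ge2 r (hdeg xr xrW).
  have exryq : e xr yq.
    move: (subsetP (sub xr xrWp xrq xrr bxr) z zN); rewrite !inE (negbTE zr) /= => /eqP ez.
    by move: zN; rewrite ez nbP => /andP[].
  have := hbip x' x'W (card_sub2 (sub x' x'Wp x'q x'r bx')).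
  have x'p : x' != p by move: x'Wp; rewrite !inE => /andP[].
  have x'yq : x' != yq by apply/eqP => e'; move: bx'; rewrite e' byq.
  have inW' : forall w, w \in W -> x' != w -> w \in W :\ x' by move=> w wW wy; rewrite !inE eq_sym wy wW.
  apply: (cyc5_nonbip (v0:=p) (v1:=q) (v2:=yq) (v3:=xr) (v4:=r)); rewrite ?inW' // 1?eq_sym //;
    by rewrite e_sym.
-
  exfalso.
  have : #|W| <= size [:: p; q; r; yq; xr].
    apply: leq_trans (card_size _); apply: subset_leq_card; apply/subsetP => z zW.
    case: (eqVneq z p) => [->|zp]; first by rewrite inE eqxx.
    have zWp : z \in W :\ p by rewrite !inE zp zW.
    rewrite !inE; apply/negPn/negP; rewrite !negb_or => /and5P[_ zq zr zyq zxr].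
    case bz: (b z).
      by apply: nA; exists z; split.
    by apply: nB; exists z; split.
  by move=> h; move: (leq_trans big h).
Qed.


Lemma hard W p q r (b : T -> bool) : 6 <= #|W| -> ~ bip W -> p \in W -> nb W p \subset [set q; r] ->
  q \in nb W p -> r \in nb W p ->
  (forall x y, x \in W :\ p -> y \in W :\ p -> e x y -> b x != b y) ->
  (forall u, u \in W -> 2 <= #|nb W u|) ->
  (forall u, u \in W -> #|nb W u| <= 2 -> bip (W :\ u)) -> good W.
Proof.
move=> big nbW pW sN qN rN hb hdeg hbip.
have bqr : b q != b r by apply/negP => /eqP bqr; apply: nbW; exact: (ext2 pW sN hb bqr).
wlog bq : b hb bqr / b q = false.
  move=> H; case bq: (b q); last exact: (H b).
  apply: (H (fun x => ~~ b x)).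
  - by move=> x y xW yW exy; move: (hb x y xW yW exy); case: (b x); case: (b y).
  - by move: bqr; case: (b q); case: (b r).
  - by rewrite bq.
have br : b r = true by move: bqr; rewrite bq; case: (b r).
case: (classic (exists t, [/\ t \in W :\ p, b t = true, t != r & ~~ e q t])) => [[t [tWp bt tr nqt]]|nT].
  exact: (hard_t pW sN qN rN hb bq br hdeg tWp bt tr nqt).
case: (classic (exists s, [/\ s \in W :\ p, b s = false, s != q & ~~ e r s])) => [[s [sWp bs sq nrs]]|nS].
  have sN' : nb W p \subset [set r; q] by rewrite setUC.
  have hb' : forall x y, x \in W :\ p -> y \in W :\ p -> e x y -> ~~ b x != ~~ b y.
    by move=> x y xW yW exy; move: (hb x y xW yW exy); case: (b x); case: (b y).
  have bq' : ~~ b r = false by rewrite br.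
  have br' : ~~ b q = true by rewrite bq.
  have bs' : ~~ b s = true by rewrite bs.
  exact: (hard_t pW sN' rN qN hb' bq' br' hdeg sWp bs' sq nrs).
apply: (hard_final pW sN qN rN hb bq br hdeg hbip big).
  move=> t tWp bt tr; apply/negPn/negP => nqt; apply: nT; by exists t.
move=> s sWp bs sq; apply/negPn/negP => nrs; apply: nS; by exists s.
Qed.

Lemma ext_free W v q r : v \in W -> nb W v \subset [set q; r] -> good (W :\ v) -> good W.
Proof.
move=> vW sN [c' gc]; have [pc' _] := gc.
have [k [kq kr]] := I3_avoid (c' q) (c' r).
pose c x := if x == v then k else c' x.
have key : forall y, y \in W -> e v y -> c y != c v.
  move=> y yW evy; have yv : y != v by rewrite eq_sym e_neq.
  have : y \in [set q; r] by apply: (subsetP sN); rewrite nbP yW.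
  rewrite /c eqxx (negbTE yv) !inE => /orP[]/eqP->; by rewrite eq_sym.
exists c; apply: (goodc_mono (W' := W :\ v)).
- by apply/subsetP => x; rewrite !inE => /andP[].
- move=> x y xW yW exy.
  case: (eqVneq x v) => [ex|xv]; first by subst x; rewrite eq_sym key.
  case: (eqVneq y v) => [ey|yv]; first by subst y; rewrite key // e_sym.
  by rewrite /c (negbTE xv) (negbTE yv); apply: pc'; rewrite // !inE ?xv ?yv.
- apply: (goodc_cong (c' := c')) => // x; rewrite !inE => /andP[xv _].
  by rewrite /c (negbTE xv).
Qed.

Lemma conn_closed (R : rel T) (A : {set T}) a y : a \in A ->
  (forall x z, x \in A -> R x z -> z \in A) -> connect R a y -> y \in A.
Proof.
move=> aA h /connectP [s pth ->]; elim: s a aA pth => [|z s IHs] a aA //=.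
by case/andP => az pth; apply: IHs (h _ _ aA az) pth.
Qed.

Definition Kc W v q := [set x in W :\ v | connect (eW (W :\ v)) q x].

Lemma Kc_closed W v q x y : x \in Kc W v q -> y \in W :\ v -> e x y -> y \in Kc W v q.
Proof.
rewrite !inE => /andP[/andP[xv xW] cx] /andP[yv yW] exy; rewrite yv yW /=.
apply: (connect_trans cx); apply: connect1; by rewrite /eW !inE xv xW yv yW exy.
Qed.

Lemma Kc_sub W v q x : x \in Kc W v q -> x \in W /\ x != v.
Proof. by rewrite !inE => /andP[/andP[-> ->] _]. Qed.

Lemma ext_comp W v q r (d : T -> 'I_3) : (forall x y, e x y -> d x != d y) ->
  v \in W -> nb W v \subset [set q; r] -> q \in nb W v -> r \notin Kc W v q ->
  good (v |: Kc W v q) -> good W.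
Proof.
move=> pd vW sN qN rK [c' gc]; have [pc' _] := gc.
set K := Kc W v q in rK gc pc' *.
set W' := v |: K in gc pc' *.
have [k [kv _]] := I3_avoid (c' v) (c' v).
pose s := tperm (d r) k.
pose c x := if x \in W' then c' x else s (d x).
have qW : q \in W by move: qN; rewrite nbP => /andP[].
have qv : q != v by move: qN; rewrite nbP => /andP[_ /e_neq]; rewrite eq_sym.
have qK : q \in K by rewrite !inE qv qW /= connect0.
have mixed : forall x y, x \in W -> y \in W -> e x y -> x \in W' -> y \notin W' -> c x != c y.
  move=> x y xW yW exy xW' yW'.
  move: (yW'); rewrite in_setU1 negb_or => /andP[yv yK].
  have xv : x = v.
    apply/eqP; move: xW'; rewrite in_setU1 => /orP[//|xK]; exfalso.
    move/negP: yK; apply; apply: (Kc_closed xK) => //; by rewrite !inE yv yW.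
  subst x.
  have : y \in [set q; r] by apply: (subsetP sN); rewrite nbP yW.
  rewrite !inE => /orP[]/eqP ey; first by move: yK; rewrite ey qK.
  subst y; rewrite /c (negbTE yW') /W' in_setU1 eqxx /= /s tpermL eq_sym kv //.
have sW' : W' \subset W.
  apply/subsetP => x; rewrite in_setU1 => /orP[/eqP->//|/Kc_sub[]//].
exists c; apply: (goodc_mono sW').
- move=> x y xW yW exy.
  case: (boolP (x \in W')) => xW'; case: (boolP (y \in W')) => yW'.
  + by rewrite /c xW' yW'; apply: pc'.
  + exact: mixed.
  + by rewrite eq_sym; apply: mixed; rewrite // e_sym.
  + rewrite /c (negbTE xW') (negbTE yW'); apply/eqP => /perm_inj /eqP.
    by apply/negP; apply: pd.
- by apply: (goodc_cong (c' := c')) => // x xW'; rewrite /c xW'.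
Qed.


Lemma connW_sym W x y : connect (eW W) x y = connect (eW W) y x.
Proof. by rewrite (sym_connect_sym (@eW_sym W)). Qed.

Lemma side W v q r (d : T -> 'I_3) : (forall x y, e x y -> d x != d y) ->
  v \in W -> nb W v \subset [set q; r] -> q \in nb W v -> r \in W -> r != v ->
  r \notin Kc W v q -> ~ bip (Kc W v q) ->
  (forall W', #|W'| < #|W| -> connW W' -> ~ bip W' -> 6 <= #|W'| -> good W') -> good W.
Proof.
move=> pd vW sN qN rW rv rK nbK IH.
apply: (ext_comp pd vW sN qN rK).
have qW : q \in W by move: qN; rewrite nbP => /andP[].
have evq : e v q by move: qN; rewrite nbP => /andP[].
have qv : q != v by rewrite eq_sym e_neq.
have qK : q \in Kc W v q by rewrite !inE qv qW /= connect0.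
have vK : v \notin Kc W v q by apply/negP => /Kc_sub [_]; rewrite eqxx.
apply: IH.
- apply: proper_card; apply/properP; split.
    by apply/subsetP => x; rewrite in_setU1 => /orP[/eqP->//|/Kc_sub[]//].
  by exists r => //; rewrite in_setU1 negb_or rv.
- have cv : forall x, x \in v |: Kc W v q -> connect (eW (v |: Kc W v q)) v x.
    move=> x; rewrite in_setU1 => /orP[/eqP->|xK]; first exact: connect0.
    have eW1 : eW (v |: Kc W v q) v q by rewrite /eW !in_setU1 eqxx qK orbT evq.
    apply: (connect_trans (connect1 eW1)).
    have : x \in [set z in Kc W v q | connect (eW (v |: Kc W v q)) q z].
      apply: (conn_closed (R := eW (W :\ v)) (a := q)).
      + by rewrite inE qK connect0.
      + move=> z z'; rewrite inE => /andP[zK cz] /and3P[_ z'W ezz'].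
        have z'K : z' \in Kc W v q by apply: (Kc_closed zK).
        rewrite inE z'K /=; apply: (connect_trans cz); apply: connect1.
        by rewrite /eW !in_setU1 zK z'K !orbT ezz'.
      + by move: xK; rewrite inE => /andP[].
    by rewrite inE => /andP[].
  move=> x y xW yW; apply: (connect_trans (y := v)); last exact: cv.
  by rewrite connW_sym; apply: cv.
- by apply: contra_not nbK; apply: bip_sub; apply/subsetP => x xK; rewrite in_setU1 xK orbT.
- rewrite cardsU1 vK add1n ltnS; exact: L5.
Qed.

Lemma main (d : T -> 'I_3) : (forall x y, e x y -> d x != d y) ->
  forall W, connW W -> ~ bip W -> 6 <= #|W| -> good W.
Proof.
move=> pd W; move: {2}#|W| (leqnn #|W|) => n; elim: n W => [|n IH] W hn cW nbW big.
  by move: (leq_trans big hn).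
have IH' : forall W', #|W'| < #|W| -> connW W' -> ~ bip W' -> 6 <= #|W'| -> good W'.
  move=> W' h; apply: IH; by rewrite -ltnS (leq_trans h hn).
case: (classic (exists2 v, v \in W & #|nb W v| <= 2 /\ ~ bip (W :\ v))) => [[v vW [dv nbv]]|hB].
  have [q qN] : exists q, q \in nb W v.
    case: (set_0Vmem (nb W v)) => [N0|[q qN]]; last by exists q.
    exfalso.
    have [z zW zv] : exists2 z, z \in W & z != v.
      have : 2 <= #|W| by apply: leq_trans big.
      by move/(card_ge2 v).
    have : z \in [set v].
      apply: (conn_closed (a := v) (R := eW W)); rewrite ?inE ?eqxx //; last exact: cW.
      move=> x y; rewrite inE => /eqP -> /and3P[_ yW evy].
      have : y \in nb W v by rewrite nbP yW evy.
      by rewrite N0 in_set0.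
    by move/set1P => ezv; rewrite ezv eqxx in zv.
  have [r rN sN] := card_le2 dv qN.
  have qW : q \in W by move: qN; rewrite nbP => /andP[].
  have rW : r \in W by move: rN; rewrite nbP => /andP[].
  have qv : q != v by move: qN; rewrite nbP => /andP[_ /e_neq]; rewrite eq_sym.
  have rv : r != v by move: rN; rewrite nbP => /andP[_ /e_neq]; rewrite eq_sym.
  have cover : forall z, z \in W -> z \in v |: (Kc W v q :|: Kc W v r).
    move=> z zW; apply: (conn_closed (a := v) (R := eW W)); rewrite ?in_setU1 ?eqxx //; last exact: cW.
    move=> x y hx /and3P[_ yW exy].
    case: (eqVneq y v) => [->|yv]; first by rewrite in_setU1 eqxx.
    have yWv : y \in W :\ v by rewrite !inE yv yW.
    rewrite in_setU1 in_setU (negbTE yv) /=; apply/orP.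
    move: hx; rewrite in_setU1 in_setU => /orP[/eqP xv|/orP[xK|xK]].
    - subst x; have : y \in [set q; r] by apply: (subsetP sN); rewrite nbP yW.
      case/set2P => ey; subst y; [left|right]; by rewrite /Kc !inE ?qv ?rv ?qW ?rW /= connect0.
    - by left; apply: (Kc_closed xK).
    - by right; apply: (Kc_closed xK).
  case: (boolP (r \in Kc W v q)) => rK.
    have sub : forall z, z \in W :\ v -> z \in Kc W v q.
      move=> z zWv; have zv : z != v by move: zWv; rewrite !inE => /andP[].
      have zW : z \in W by move: zWv; rewrite !inE => /andP[].
      move: (cover z zW); rewrite in_setU1 (negbTE zv) /= in_setU => /orP[//|zKr].
      move: zKr rK; rewrite /Kc !inE zv zW /= => crz /andP[_ cqr].
      exact: connect_trans cqr crz.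
    have cWv : connW (W :\ v).
      move=> x y /sub xK /sub yK; move: xK yK; rewrite !inE => /andP[_ cx] /andP[_ cy].
      by apply: (connect_trans (y := q)); rewrite // connW_sym.
    have h5 := L5 nbv.
    have cWv1 : #|W| = (#|W :\ v|).+1 by rewrite (cardsD1 v) vW.
    case: (ltngtP #|W :\ v| 5) => [h4|h6|h5'].
    + by move: h5; rewrite leqNgt h4.
    + apply: (ext_free vW sN); apply: IH' => //; by rewrite cWv1.
    + apply: (baseC vW nbv h5'); exists q; first by rewrite !inE qv qW.
      by move: qN; rewrite nbP => /andP[].
  have qK : q \in Kc W v q by rewrite /Kc !inE qv qW /= connect0.
  have qKr : q \notin Kc W v r.
    apply/negP => qKr; move/negP: rK; apply.
    move: qKr; rewrite /Kc !inE rv rW qv qW /= => crq; by rewrite connW_sym.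
  case: (classic (bip (Kc W v q))) => [[b1 hb1]|nbq]; last exact: (side pd vW sN qN rW rv rK nbq IH').
  case: (classic (bip (Kc W v r))) => [[b2 hb2]|nbr].
    exfalso; apply: nbv.
    have inK : forall z, z \in W :\ v -> z \notin Kc W v q -> z \in Kc W v r.
      move=> z zWv zK; have zv : z != v by move: zWv; rewrite !inE => /andP[].
      have zW : z \in W by move: zWv; rewrite !inE => /andP[].
      by move: (cover z zW); rewrite in_setU1 (negbTE zv) /= in_setU (negbTE zK).
    exists (fun x => if x \in Kc W v q then b1 x else b2 x) => x y xWv yWv exy.
    case: (boolP (x \in Kc W v q)) => xK.
      have yK : y \in Kc W v q := Kc_closed xK yWv exy.
      by rewrite yK; apply: hb1.
    case: (boolP (y \in Kc W v q)) => yK.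
      by move: xK; rewrite (Kc_closed yK xWv) // e_sym.
    by apply: hb2 => //; apply: inK.
  have sN' : nb W v \subset [set r; q] by rewrite setUC.
  exact: (side pd vW sN' rN qW qv qKr nbr IH').
have hbip : forall u, u \in W -> #|nb W u| <= 2 -> bip (W :\ u).
  move=> u uW du; apply: NNPP => nb'; apply: hB; by exists u.
case: (classic (exists2 p, p \in W & #|nb W p| <= 2)) => [[p pW dp]|hC].
  have hdeg : forall u, u \in W -> 2 <= #|nb W u|.
    move=> u uW; rewrite ltnNge; apply/negP => du.
    have [b hb] := hbip u uW (leq_trans du (leqnSn 1)).
    have [q0 sq] := card_le1 u du.
    apply: nbW; apply: (ext2 (q:=q0) (r:=q0) uW _ hb) => //; by rewrite setUid.
  have [q qN _] := card_ge2 p (hdeg p pW).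
  have [r rN sN] := card_le2 dp qN.
  have [b hb] := hbip p pW dp.
  exact: (hard big nbW pW sN qN rN hb hdeg hbip).
apply: (delta3 pd nbW) => v vW; rewrite ltnNge; apply/negP => dv; apply: hC; by exists v.
Qed.


Lemma chi_props (d0 : {ffun T -> 'I_3}) : proper_colouring e d0 -> forall x y, e x y -> d0 x != d0 y.
Proof.
rewrite /proper_colouring => /forallP h x y exy.
by move/forallP: (h x) => /(_ y) /implyP; apply.
Qed.

Lemma nonbip_T : is_chromatic_number e 3 -> ~ bip setT.
Proof.
move=> [_ no] [b hb].
pose c2 : {ffun T -> 'I_2} := [ffun x => if b x then @Ordinal 2 1 isT else @Ordinal 2 0 isT].
apply: (negP (no 2 isT c2)).
apply/forallP => u; apply/forallP => v; apply/implyP => euv; rewrite !ffunE.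
by move: (hb u v (in_setT u) (in_setT v) euv); case: (b u); case: (b v).
Qed.

Lemma connW_T : connected_graph e -> connW setT.
Proof.
move=> hc x y _ _.
have E : eW setT =2 e by move=> u v; rewrite /eW !in_setT.
by rewrite (eq_connect E).
Qed.

Lemma sn_contra : 6 <= #|T| -> good setT -> is_chromatic_number e 3 -> is_sn e (#|T| - 2) -> False.
Proof.
move=> h6 [c [pc [U [_ cU hU]]]] hchi hsn.
have [[d0 pd0] no] := hchi.
pose cf : {ffun T -> 'I_3} := [ffun x => c x].
pose S := ~: U.
have pcf : proper_colouring e cf.
  apply/forallP => u; apply/forallP => v; apply/implyP => euv; rewrite !ffunE.
  exact: (pc _ _ (in_setT u) (in_setT v) euv).
have dS : determining e cf S.
  apply/forallP => c'; apply/implyP => /andP[pc' /forall_inP ag]; apply/eqP/ffunP => x.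
  rewrite ffunE; apply: hU (in_setT x).
  - by move=> u v _ _ euv; exact: (chi_props pc' euv).
  - move=> y _ yU; apply/eqP; have := ag y; rewrite inE yU => /(_ isT).
    by rewrite ffunE.
have P0 : (fun S0 : {set T} => determining e cf S0 && (S0 \subset S)) S by rewrite /= dS subxx.
case: (@arg_minnP _ S (fun S0 : {set T} => determining e cf S0 && (S0 \subset S)) (fun S0 => #|S0|) P0) => S0 /andP[dS0 sS0] minS0.
have crit : critical e cf S0.
  rewrite /critical dS0 /=; apply/forallP => S'; apply/implyP => prS'; apply/negP => dS'.
  have := minS0 S'; rewrite dS' (subset_trans (proper_sub prS') sS0) => /(_ isT).
  by rewrite leqNgt (proper_card prS').
case: hsn => k [hk [_ hlow]].
have ek : k = 3.
  case: (ltngtP k 3) => // hk3; exfalso.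
  - have [[ck pck] _] := hk; by move: (no k hk3 ck); rewrite pck.
  - have [_ nok] := hk; by move: (nok 3 hk3 d0); rewrite pd0.
subst k.
have h1 := hlow cf S0 pcf crit.
have h2 : #|S0| <= #|S| := subset_leq_card sS0.
have h3 : #|S| + 3 = #|T| by rewrite -cU addnC cardsC.
clear -h1 h2 h3 h6; lia.
Qed.

Ltac poss := repeat match goal with
 | H : is_true (e ?x ?y) |- context [e ?x ?y] => rewrite H
 | H : is_true (e ?x ?y) |- context [e ?y ?x] => rewrite (e_sym y x) H
 end.

Definition i5 (k : nat) (h : k < 5) : 'I_5 := Ordinal h.

Lemma fwd : connected_graph e -> is_chromatic_number e 3 -> is_sn e (#|T| - 2) ->
  isomorphic_to_C5 e.
Proof.
move=> hc hchi hsn.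
have [[d0 pd0] no] := hchi.
have pd := chi_props pd0.
have nbT := nonbip_T hchi.
have cT := connW_T hc.
have h5 : #|[set: T]| = 5.
  have L := L5 nbT.
  case: (ltngtP #|[set: T]| 5) => // h6; first by move: L; rewrite leqNgt h6.
  exfalso; rewrite cardsT in h6.
  apply: (sn_contra h6 _ hchi hsn); apply: (main pd cT nbT); by rewrite cardsT.
have [v0 [v1 [v2 [v3 [v4 [C hm]]]]]] := struct5 nbT h5.
have memT : forall x, x \in [:: v0; v1; v2; v3; v4] by move=> x; rewrite -hm in_setT.
have [[d01 d12 d23 d34 d40] [d02 d13 d24 d30 d41]] := isC5_neq C.
case: C => [[e01 e12 e23 e34 e40] [n02 n13 n24 n30 n41] _].
pose f x := if x == v0 then @i5 0 isT else if x == v1 then @i5 1 isT else if x == v2 then @i5 2 isT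
            else if x == v3 then @i5 3 isT else @i5 4 isT.
pose g (i : 'I_5) := nth v0 [:: v0; v1; v2; v3; v4] i.
exists f; split.
  exists g.
  - move=> x; move: (memT x); memcase; rewrite /f /g; neqs; done.
  - case=> [[|[|[|[|[|?]]]]] Hi] //; apply/val_inj; rewrite /f /g /=; neqs; done.
move=> x y; move: (memT x) (memT y); memcase; memcase; rewrite /f; neqs; nes; poss; done.
Qed.

End Main.

Definition sel (a0 a1 a2 a3 a4 : nat) (i : nat) : nat :=
  match i with 0 => a0 | 1 => a1 | 2 => a2 | 3 => a3 | _ => a4 end.
Definition pr5 (a0 a1 a2 a3 a4 : nat) := [&& a0 != a1, a1 != a2, a2 != a3, a3 != a4 & a4 != a0].
Definition I3 := iota 0 3.

Lemma C5_nodet : all (fun a0 => all (fun a1 => all (fun a2 => all (fun a3 => all (fun a4 =>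
  pr5 a0 a1 a2 a3 a4 ==> all (fun i => all (fun j => has (fun b0 => has (fun b1 => has (fun b2 => has (fun b3 => has (fun b4 =>
   [&& pr5 b0 b1 b2 b3 b4, sel b0 b1 b2 b3 b4 i == sel a0 a1 a2 a3 a4 i, sel b0 b1 b2 b3 b4 j == sel a0 a1 a2 a3 a4 j &
     [|| b0 != a0, b1 != a1, b2 != a2, b3 != a3 | b4 != a4]]) I3) I3) I3) I3) I3) (iota 0 5)) (iota 0 5)) I3) I3) I3) I3) I3.
Proof. by vm_compute. Qed.

Lemma C5_tf (i j k : 'I_5) : ~~ [&& C5_adj i j, C5_adj j k & C5_adj i k].
Proof. by case: i j k => [[|[|[|[|[|?]]]]] ?] [[|[|[|[|[|?]]]]] ?] [[|[|[|[|[|?]]]]] ?]. Qed.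

Lemma C5_sym (i j : 'I_5) : C5_adj i j = C5_adj j i.
Proof. by case: i j => [[|[|[|[|[|?]]]]] ?] [[|[|[|[|[|?]]]]] ?]. Qed.

Definition col5 (i : 'I_5) : 'I_3 :=
  match val i with 0 => k0 | 1 => k1 | 2 => k0 | 3 => k1 | _ => k2 end.

Lemma C5_col (i j : 'I_5) : C5_adj i j -> col5 i != col5 j.
Proof. by case: i j => [[|[|[|[|[|?]]]]] ?] [[|[|[|[|[|?]]]]] ?]. Qed.

Lemma sel_adj b0 b1 b2 b3 b4 (i j : 'I_5) : pr5 b0 b1 b2 b3 b4 -> C5_adj i j ->
  sel b0 b1 b2 b3 b4 i != sel b0 b1 b2 b3 b4 j.
Proof.
rewrite /pr5 => /and5P[h1 h2 h3 h4 h5].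
by case: i j => [[|[|[|[|[|?]]]]] ?] [[|[|[|[|[|?]]]]] ?] //= _; rewrite // eq_sym.
Qed.

Section Bwd.
Variables (T : finType) (e : rel T) (f : T -> 'I_5) (g : 'I_5 -> T).
Hypotheses (fK : cancel f g) (gK : cancel g f) (hf : forall x y, e x y = C5_adj (f x) (f y)).

Let j0 := @i5 0 isT.
Let j1 := @i5 1 isT.
Let j2 := @i5 2 isT.
Let j3 := @i5 3 isT.
Let j4 := @i5 4 isT.

Lemma eg i j : e (g i) (g j) = C5_adj i j.
Proof. by rewrite hf !gK. Qed.

Lemma card5 : #|T| = 5.
Proof. by rewrite (bij_eq_card (f := f)) ?card_ord //; exists g. Qed.

Lemma allI5 (P : 'I_5 -> Prop) : P j0 -> P j1 -> P j2 -> P j3 -> P j4 -> forall i, P i.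
Proof.
move=> h0 h1 h2 h3 h4 [[|[|[|[|[|?]]]]] Hi] //.
- by have -> : Ordinal Hi = j0 by apply: val_inj.
- by have -> : Ordinal Hi = j1 by apply: val_inj.
- by have -> : Ordinal Hi = j2 by apply: val_inj.
- by have -> : Ordinal Hi = j3 by apply: val_inj.
- by have -> : Ordinal Hi = j4 by apply: val_inj.
Qed.

Lemma conn : connected_graph e.
Proof.
have esym : symmetric e by move=> x y; rewrite !hf C5_sym.
have c01 : connect e (g j0) (g j1) by apply: connect1; rewrite eg.
have c12 : connect e (g j1) (g j2) by apply: connect1; rewrite eg.
have c23 : connect e (g j2) (g j3) by apply: connect1; rewrite eg.
have c34 : connect e (g j3) (g j4) by apply: connect1; rewrite eg.
have h0 : forall i, connect e (g j0) (g i).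
  apply: allI5; first exact: connect0.
  - exact: c01.
  - exact: connect_trans c01 c12.
  - exact: connect_trans (connect_trans c01 c12) c23.
  - exact: connect_trans (connect_trans (connect_trans c01 c12) c23) c34.
move=> x y; rewrite -(fK x) -(fK y).
apply: (connect_trans (y := g j0)); last exact: h0.
by rewrite (sym_connect_sym esym); apply: h0.
Qed.

Lemma tfree : triangle_free e.
Proof. move=> x y z; rewrite !hf; exact/negP/C5_tf. Qed.

Lemma chrom : is_chromatic_number e 3.
Proof.
split.
  exists [ffun x => col5 (f x)]; apply/forallP => u; apply/forallP => v; apply/implyP.
  by rewrite hf !ffunE; exact: C5_col.
move=> j hj c; apply/negP => /forallP pc.
have P : forall i i', C5_adj i i' -> c (g i) != c (g i').
  by move=> i i' a; move/forallP: (pc (g i)) => /(_ (g i')) /implyP; apply; rewrite eg.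
move: j hj c P pc => [|[|[|?]]] // _ c P _.
- by case: (c (g j0)).
- move: (P j0 j1 isT); case: (c (g j0)) => [[|?] ?] //; case: (c (g j1)) => [[|?] ?] //.
- move: (P j0 j1 isT) (P j1 j2 isT) (P j2 j3 isT) (P j3 j4 isT) (P j4 j0 isT).
  case: (c (g j0)) => [a0 H0]; case: (c (g j1)) => [a1 H1]; case: (c (g j2)) => [a2 H2];
  case: (c (g j3)) => [a3 H3]; case: (c (g j4)) => [a4 H4].
  rewrite -!val_eqE /= => h1 h2 h3 h4 h5; lia.
Qed.

Lemma nodet (c : {ffun T -> 'I_3}) (S : {set T}) : proper_colouring e c -> #|S| <= 2 ->
  ~~ determining e c S.
Proof.
move=> /forallP pc hS.
have P : forall i i', C5_adj i i' -> c (g i) != c (g i').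
  by move=> i i' a; move/forallP: (pc (g i)) => /(_ (g i')) /implyP; apply; rewrite eg.
have [x [y sxy]] : exists x y, S \subset [set x; y].
  case: (set_0Vmem S) => [->|[x xS]]; first by exists (g j0), (g j0); exact: sub0set.
  have [y _ s] := card_le2 hS xS; by exists x, y.
pose a0 := val (c (g j0)). pose a1 := val (c (g j1)). pose a2 := val (c (g j2)).
pose a3 := val (c (g j3)). pose a4 := val (c (g j4)).
have pa : pr5 a0 a1 a2 a3 a4.
  by apply/and5P; split; rewrite val_eqE; apply: P.
have m3 : forall z : 'I_3, val z \in I3 by move=> z; rewrite mem_iota /= ltn_ord.
have m5 : forall z : 'I_5, val z \in iota 0 5 by move=> z; rewrite mem_iota /= ltn_ord.
have := C5_nodet.
move=> /allP /(_ a0 (m3 _)) /allP /(_ a1 (m3 _)) /allP /(_ a2 (m3 _)) /allP /(_ a3 (m3 _))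
        /allP /(_ a4 (m3 _)) /implyP /(_ pa) /allP /(_ _ (m5 (f x))) /allP /(_ _ (m5 (f y))).
case/hasP => b0 b0I /hasP[b1 b1I] /hasP[b2 b2I] /hasP[b3 b3I] /hasP[b4 b4I] /and4P[pb hx hy hne].
have lt3 : forall b, b \in I3 -> b < 3 by move=> b; rewrite mem_iota.
have sel_lt : forall k, sel b0 b1 b2 b3 b4 k < 3.
  by case=> [|[|[|[|k]]]] /=; apply: lt3.
have sel_a : forall k : 'I_5, sel a0 a1 a2 a3 a4 k = val (c (g k)) by apply: allI5.
pose c' := [ffun z => (inord (sel b0 b1 b2 b3 b4 (val (f z))) : 'I_3)].
have c'v : forall z, val (c' z) = sel b0 b1 b2 b3 b4 (val (f z)).
  by move=> z; rewrite ffunE; apply: inordK; apply: sel_lt.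
apply/negP => /forallP /(_ c') /implyP H.
have : c' == c.
  apply: H; apply/andP; split.
    apply/forallP => u; apply/forallP => v; apply/implyP; rewrite hf => a.
    by rewrite -val_eqE /= !c'v; apply: sel_adj.
  apply/forall_inP => s /(subsetP sxy); case/set2P => ->; rewrite -val_eqE /= c'v.
    by rewrite (eqP hx) sel_a fK.
  by rewrite (eqP hy) sel_a fK.
move/eqP => E.
have Ek : forall k : 'I_5, sel b0 b1 b2 b3 b4 k = sel a0 a1 a2 a3 a4 k.
  by move=> k; rewrite sel_a -E c'v gK.
have e0 : b0 = a0 := Ek j0.
have e1 : b1 = a1 := Ek j1.
have e2 : b2 = a2 := Ek j2.
have e3 : b3 = a3 := Ek j3.
have e4 : b4 = a4 := Ek j4.
by move: hne; rewrite e0 e1 e2 e3 e4 !eqxx.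
Qed.

Lemma is_sn3 : is_sn e 3.
Proof.
have ginj : injective g := can_inj gK.
pose cc := [ffun x => col5 (f x)].
have pcc : proper_colouring e cc.
  apply/forallP => u; apply/forallP => v; apply/implyP.
  by rewrite hf !ffunE; exact: C5_col.
exists 3; split; first exact: chrom.
split; last first.
  move=> c S pc /andP[dS _]; rewrite leqNgt; apply/negP => hS.
  by move: dS; rewrite (negbTE (nodet pc _)).
exists cc, [set g j1; g j2; g j4]; split => //; split; last first.
  by rewrite -setUA cardsU1 cards2 !inE !(inj_eq ginj).
apply/andP; split; last first.
  apply/forallP => S'; apply/implyP => prS'; apply: nodet => //.
  move: (proper_card prS'); by rewrite -setUA cardsU1 cards2 !inE !(inj_eq ginj).
apply/forallP => c'; apply/implyP => /andP[/forallP pc' /forall_inP ag].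
have P : forall i i', C5_adj i i' -> c' (g i) != c' (g i').
  by move=> i i' a; move/forallP: (pc' (g i)) => /(_ (g i')) /implyP; apply; rewrite eg.
have a1 : c' (g j1) = k1 by apply/eqP; rewrite (eqP (ag _ _)) ?ffunE ?gK // !inE eqxx.
have a2 : c' (g j2) = k0 by apply/eqP; rewrite (eqP (ag _ _)) ?ffunE ?gK // !inE eqxx ?orbT.
have a4 : c' (g j4) = k2 by apply/eqP; rewrite (eqP (ag _ _)) ?ffunE ?gK // !inE eqxx ?orbT.
apply/eqP/ffunP => x; rewrite -(fK x) ffunE gK; move: (f x); apply: allI5.
- apply: (I3_force (a := k1) (b := k2)) => //; rewrite -?a1 -?a4; apply: P => //.
- by rewrite a1.
- by rewrite a2.
- apply: (I3_force (a := k0) (b := k2)) => //; rewrite -?a2 -?a4; apply: P => //.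
- by rewrite a4.
Qed.

End Bwd.

Theorem proposition2 (T : finType) (e : rel T)
    (e_sym : symmetric e) (e_irr : irreflexive e) :
  (connected_graph e /\ triangle_free e /\ is_chromatic_number e 3 /\
   is_sn e (#|T| - 2)) <-> isomorphic_to_C5 e.
Proof.
split.
- move=> [hc [tf [hchi hsn]]]; exact: (fwd e_sym e_irr tf hc hchi hsn).
- move=> [f [[g fK gK] hf]].
  rewrite (card5 fK gK) /=.
  split; first exact: (conn fK gK hf).
  split; first exact: (tfree hf).
  split; first exact: (chrom gK hf).
  exact: (is_sn3 fK gK hf).
Qed.
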